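(* Let $D\geq 3$ be an integer, let $n\geq 1$, and let $A\subset(\mathbb{Z}/D\mathbb{Z})^{n}$ be a sunflower-free set. Then \[ |A|\leq c_{D}^{n},\qquad\text{where } c_{D}=\frac{3}{2^{2/3}}(D-1)^{2/3}. \]
   Context: A set $A\subset(\mathbb{Z}/D\mathbb{Z})^{n}$ is called sunflower-free if for every triple of distinct elements $x,y,z\in A$ there exists a coordinate $i\in\{1,\dots,n\}$ such that exactly two of $x_i,y_i,z_i$ are equal. (Equivalently, $A$ contains no three distinct vectors which, in every coordinate, are either all equal or all pairwise different.) *)

(* Defs.v *)
From mathcomp Require Import all_boot.
From Stdlib Require Import Reals.
Set Implicit Arguments. Unset Strict Implicit. Unset Printing Implicit Defensive.

(* Z/DZ is represented by the ordinal type 'I_D (only equality of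
   coordinates matters for sunflower-freeness). Vectors of (Z/DZ)^n are
   finite functions 'I_n -> 'I_D. *)
Definition vec (D n : nat) := {ffun 'I_n -> 'I_D}.

Definition exactly_two {T : eqType} (a b c : T) : bool :=
  [|| (a == b) && (b != c), (b == c) && (c != a) | (a == c) && (a != b)].

Definition sunflower_free (D n : nat) (A : {set vec D n}) : Prop :=
  forall x y z, x \in A -> y \in A -> z \in A ->
    x != y -> y != z -> x != z ->
    exists i : 'I_n, exactly_two (x i) (y i) (z i).

Definition c_const (D : nat) : R :=
  (3 / Rpower 2 (2/3) * Rpower (INR D - 1) (2/3))%R.

(* Main.v *)
Require Import Defs.
From mathcomp Require Import all_boot all_algebra.
From mathcomp Require Import zify.
From Stdlib Require Import Lia Reals Lra.
From mathcomp Require Import ssrnat.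
Set Implicit Arguments. Unset Strict Implicit. Unset Printing Implicit Defensive.
Import GRing.Theory.
Local Open Scope ring_scope.

Section Core.
Variables (I : finType) (D : nat).
Local Notation V := {ffun I -> 'I_D.+1}.
Local Notation F := 'F_3.

Definition ee (v a : 'I_D.+1) : F := if v == ord0 then 1 else (a == v)%:R.
Definition phi (g x : V) : F := \prod_i ee (g i) (x i).
Definition supp (g : V) := [set i | g i != ord0].
Definition inSpan k (G : V -> F) :=
  exists c : V -> F, (forall g, c g != 0 -> (#|supp g| <= k)%nat) /\
    forall x, G x = \sum_g c g * phi g x.

Lemma inSpan0 k : inSpan k (fun _ => 0).
Proof.
exists (fun _ => 0); split=> [g|x]; first by rewrite eqxx.
by rewrite big1 // => g _; rewrite mul0r.
Qed.

Lemma inSpanD k G1 G2 : inSpan k G1 -> inSpan k G2 ->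
  inSpan k (fun x => G1 x + G2 x).
Proof.
move=> [c1 [h1 e1]] [c2 [h2 e2]]; exists (fun g => c1 g + c2 g); split.
  move=> g; case: (eqVneq (c1 g) 0) => [->|/h1 //]; rewrite add0r; exact: h2.
by move=> x; rewrite e1 e2 -big_split /=; apply: eq_bigr => g _; rewrite mulrDl.
Qed.

Lemma inSpanZ k a G : inSpan k G -> inSpan k (fun x => a * G x).
Proof.
move=> [c [h e]]; exists (fun g => a * c g); split.
  by move=> g; rewrite mulf_eq0 negb_or => /andP[_ /h].
by move=> x; rewrite e big_distrr /=; apply: eq_bigr => g _; rewrite mulrA.
Qed.

Lemma inSpan_ext k G1 G2 : (forall x, G1 x = G2 x) -> inSpan k G1 -> inSpan k G2.
Proof. by move=> e [c [h e1]]; exists c; split=> // x; rewrite -e. Qed.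

Lemma inSpan_sum k (J : finType) (P : pred J) (G : J -> V -> F) :
  (forall j, P j -> inSpan k (G j)) ->
  inSpan k (fun x => \sum_(j | P j) G j x).
Proof.
move=> hG; rewrite /index_enum; elim: (Finite.enum J) => [|j r IH].
  by apply: inSpan_ext (inSpan0 k) => x; rewrite big_nil.
case Pj: (P j).
  apply: inSpan_ext (inSpanD (hG j Pj) IH) => x; by rewrite big_cons Pj.
by apply: inSpan_ext IH => x; rewrite big_cons Pj.
Qed.

Lemma inSpan_prod k (Fi : I -> 'I_D.+1 -> F) (S : {set I}) :
  (#|S| <= k)%nat -> (forall i, i \notin S -> forall a, Fi i a = Fi i ord0) ->
  inSpan k (fun x => \prod_i Fi i (x i)).
Proof.
move=> hS hc.
pose beta i (v : 'I_D.+1) := if v == ord0 then Fi i ord0 else Fi i v - Fi i ord0.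
have hb : forall i a, Fi i a = \sum_v beta i v * ee v a.
  move=> i a; rewrite (bigD1 ord0) //= /beta /ee eqxx mulr1.
  case: (eqVneq a ord0) => [->|na].
    rewrite big1 ?addr0 // => v nv; rewrite (negPf nv) eq_sym (negPf nv) mulr0 //.
  rewrite (bigD1 a) //= big1 ?addr0.
    by rewrite (negPf na) eqxx mulr1 addrC subrK.
  by move=> v /andP[nv nva]; rewrite (negPf nv) eq_sym (negPf nva) mulr0.
exists (fun g => \prod_i beta i (g i)); split.
  move=> g nz; apply: leq_trans hS; apply: subset_leq_card; apply/subsetP => i.
  rewrite inE => ngi; apply/negPn/negP => niS; move: nz.
  rewrite (bigD1 i) //= /beta (negPf ngi) (hc i niS) subrr mul0r eqxx //.
move=> x; under eq_bigr do rewrite hb.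
rewrite bigA_distr_bigA /=; apply: eq_bigr => g _.
by rewrite /phi -big_split.
Qed.


Definition tt (j : nat) (a b c : 'I_D.+1) : F :=
  if j == 0%nat then 1 else if j == 1%nat then - (a == b)%:R
  else if j == 2%nat then - (b == c)%:R else - (a == c)%:R.
Definition term (s : {ffun I -> 'I_4}) (x y z : V) : F :=
  \prod_i tt (s i) (x i) (y i) (z i).
Definition TT (x y z : V) : F := \prod_i \sum_(j < 4) tt j (x i) (y i) (z i).

Lemma TT_sum x y z : TT x y z = \sum_s term s x y z.
Proof. by rewrite /TT bigA_distr_bigA. Qed.

Definition cx (s : {ffun I -> 'I_4}) := #|[set i | ((s i : nat) == 1%nat) || ((s i : nat) == 3%nat)]|.
Definition cy (s : {ffun I -> 'I_4}) := #|[set i | ((s i : nat) == 1%nat) || ((s i : nat) == 2%nat)]|.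
Definition cz (s : {ffun I -> 'I_4}) := #|[set i | ((s i : nat) == 2%nat) || ((s i : nat) == 3%nat)]|.

Lemma span_x k s y z : (cx s <= k)%nat -> inSpan k (fun x => term s x y z).
Proof.
move=> h; apply: (inSpan_prod (Fi := fun i a => tt (s i) a (y i) (z i))) h _.
move=> i; rewrite inE /tt; have := ltn_ord (s i).
by case: (s i : nat) => [|[|[|[|m]]]].
Qed.

Lemma span_y k s x z : (cy s <= k)%nat -> inSpan k (fun y => term s x y z).
Proof.
move=> h; apply: (inSpan_prod (Fi := fun i b => tt (s i) (x i) b (z i))) h _.
move=> i; rewrite inE /tt; have := ltn_ord (s i).
by case: (s i : nat) => [|[|[|[|m]]]].
Qed.

Lemma span_z k s x y : (cz s <= k)%nat -> inSpan k (fun z => term s x y z).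
Proof.
move=> h; apply: (inSpan_prod (Fi := fun i c => tt (s i) (x i) (y i) c)) h _.
move=> i; rewrite inE /tt; have := ltn_ord (s i).
by case: (s i : nat) => [|[|[|[|m]]]].
Qed.

Lemma card_sum (P : pred I) : #|[set i | P i]| = (\sum_i (P i : nat))%nat.
Proof. by rewrite cardsE -sum1_card big_mkcond. Qed.

Lemma cxyz s : (cx s + cy s + cz s <= 2 * #|I|)%nat.
Proof.
rewrite /cx /cy /cz !card_sum -!big_split /=.
have -> : (2 * #|I| = \sum_(i : I) 2)%nat by rewrite sum_nat_const mulnC.
apply: leq_sum => i _; have := ltn_ord (s i).
by case: (s i : nat) => [|[|[|[|m]]]].
Qed.

Definition KF (A : {set V}) := forall u v w, u \in A -> v \in A -> w \in A ->
  ~~ ((u == v) && (v == w)) ->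
  exists i, [|| (u i == v i) && (v i != w i), (v i == w i) && (w i != u i)
             | (u i == w i) && (u i != v i)].

Lemma f_val a b c : \sum_(j < 4) tt j a b c = 1 - (a == b)%:R - (b == c)%:R - (a == c)%:R.
Proof. by rewrite !big_ord_recl big_ord0 /tt /= addr0 !addrA. Qed.

Lemma ex2_f0 (a b c : 'I_D.+1) :
  [|| (a == b) && (b != c), (b == c) && (c != a) | (a == c) && (a != b)] ->
  1 - (a == b)%:R - (b == c)%:R - (a == c)%:R = 0 :> F.
Proof.
case/or3P => /andP[/eqP e n].
- subst b; rewrite eqxx (negPf n); by apply/eqP.
- subst c; rewrite eqxx eq_sym (negPf n); by apply/eqP.
- subst c; rewrite eqxx (eq_sym b) (negPf n); by apply/eqP.
Qed.

Lemma TT_diag (A : {set V}) : KF A -> forall x y z, x \in A -> y \in A -> z \in A ->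
  TT x y z = ((x == y) && (y == z))%:R.
Proof.
move=> hA x y z xA yA zA; case: (boolP ((x == y) && (y == z))) => [/andP[/eqP exy /eqP eyz] | nxyz].
  rewrite exy eyz /TT big1 ?mulr1n // => i _; rewrite f_val eqxx; by apply/eqP.
have [i hi] := hA x y z xA yA zA nxyz.
by rewrite /TT (bigD1 i) //= f_val ex2_f0 // mul0r.
Qed.


Lemma support (m n : nat) (P : 'M[F]_(m, n)) :
  exists r (f : 'I_r -> 'I_n) (h : 'rV_n),
    [/\ injective f, (n <= r + \rank P)%nat, h *m P^T = 0 & forall j, h 0 (f j) = 1].
Proof.
pose K := kermx P^T.
pose Bs := row_base K.
have rkB : row_full Bs^T by rewrite /row_full mxrank_tr (eq_row_base K).
pose f := fullrankfun rkB.
pose C := rowsub f Bs^T.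
have Cu : C^T \in unitmx by rewrite unitmx_tr fullrowsub_unit.
pose w : 'rV_(\rank K) := const_mx 1 *m invmx C^T.
exists (\rank K), f, (w *m Bs); split.
- exact: fullrankfun_inj.
- by rewrite mxrank_ker mxrank_tr subnK // rank_leq_col.
- rewrite -mulmxA; have -> : Bs *m P^T = 0; last by rewrite mulmx0.
  apply/sub_kermxP; by rewrite /Bs (eq_row_base K).
- move=> j; have : (w *m C^T) 0 j = 1 by rewrite -mulmxA mulVmx // mulmx1 mxE.
  rewrite !mxE => <-; apply: eq_bigr => l _; by rewrite !mxE.
Qed.


Section Main.
Variable (A : {set V}).
Hypothesis hA : KF A.
Let N := #|A|.
Let aa (x : 'I_N) : V := enum_val x.
Let k := ((2 * #|I|) %/ 3)%nat.
Let Gk := [set g : V | (#|supp g| <= k)%nat].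
Let M := #|Gk|.
Let Phi : 'M[F]_(M, N) := \matrix_(j, x) phi (enum_val j) (aa x).

Lemma span_row G : inSpan k G -> (\row_x G (aa x) <= Phi)%MS.
Proof.
case=> c [hc e]; apply/submxP; exists (\row_j c (enum_val j)).
apply/rowP => x; rewrite !mxE e (bigID (fun g => g \in Gk)) /=.
rewrite [X in _ + X]big1 ?addr0.
  rewrite (big_enum_val (fun g => c g * phi g (aa x))) /=.
  apply: eq_bigr => j _; rewrite !mxE; reflexivity.
move=> g ngG; case: (eqVneq (c g) 0) => [->|/hc cg]; first by rewrite mul0r.
by move: ngG; rewrite inE cg.
Qed.

Lemma span_ker G (h : 'rV_N) : h *m Phi^T = 0 -> inSpan k G ->
  \sum_x h 0 x * G (aa x) = 0.
Proof.
move=> hk /span_row /submxP [w ew].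
have e0 : (h *m (w *m Phi)^T) 0 0 = 0.
  by rewrite trmx_mul mulmxA hk mul0mx mxE.
rewrite -ew in e0; apply: etrans e0; rewrite mxE.
apply: eq_bigr => x _; by rewrite !mxE.
Qed.

Definition PX s := (cx s <= k)%nat.
Definition PY s := ~~ PX s && (cy s <= k)%nat.
Definition PZ s := ~~ PX s && ~~ (cy s <= k)%nat.

Lemma PZ_cz s : PZ s -> (cz s <= k)%nat.
Proof.
rewrite /PZ /PX -!ltnNge => /andP[h1 h2]; have := cxyz s.
rewrite /k; move: (cx s) (cy s) (cz s) h1 h2 => a b c h1 h2 h3.
apply/negPn/negP; rewrite -ltnNge => h4.
have e := divn_eq (2 * #|I|) 3; have := ltn_pmod (2 * #|I|) (isT : 0 < 3)%nat.
lia.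
Qed.

Theorem core : (N <= 3 * M)%nat.
Proof.
have [r [f [h [finj hr hk hf]]]] := support Phi.
pose BM : 'M[F]_N := \matrix_(x, y) \sum_z h 0 z * TT (aa x) (aa y) (aa z).
pose BX : 'M[F]_N := \matrix_(x, y) \sum_z h 0 z * \sum_(s | PX s) term s (aa x) (aa y) (aa z).
pose BY : 'M[F]_N := \matrix_(x, y) \sum_z h 0 z * \sum_(s | PY s) term s (aa x) (aa y) (aa z).
pose BZ : 'M[F]_N := \matrix_(x, y) \sum_z h 0 z * \sum_(s | PZ s) term s (aa x) (aa y) (aa z).
have eB : BM = BX + BY + BZ.
  apply/matrixP => x y; rewrite !mxE -!big_split /=; apply: eq_bigr => z _.
  by rewrite -!mulrDr TT_sum (bigID PX) /= [X in _ + X](bigID (fun s => cy s <= k)%nat) /= addrA.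
have BZ0 : BZ = 0.
  apply/matrixP => x y; rewrite !mxE; apply: (span_ker (G := fun zv => \sum_(s | PZ s) term s (aa x) (aa y) zv)) hk _.
  apply: inSpan_sum => s /PZ_cz; exact: span_z.
have rY : (\rank BY <= \rank Phi)%nat.
  apply: mxrankS; apply/row_subP => x.
  pose G := fun yv => \sum_z h 0 z * \sum_(s | PY s) term s (aa x) yv (aa z).
  have -> : row x BY = \row_y G (aa y) by apply/rowP => y; rewrite !mxE.
  apply: span_row; rewrite /G; apply: inSpan_sum => z _; apply: inSpanZ; apply: inSpan_sum => s.
  by case/andP => _; exact: span_y.
have rX : (\rank BX <= \rank Phi)%nat.
  rewrite -mxrank_tr; apply: mxrankS; apply/row_subP => y.
  pose G := fun xv => \sum_z h 0 z * \sum_(s | PX s) term s xv (aa y) (aa z).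
  have -> : row y BX^T = \row_x G (aa x) by apply/rowP => x; rewrite !mxE.
  apply: span_row; rewrite /G; apply: inSpan_sum => z _; apply: inSpanZ; apply: inSpan_sum => s.
  exact: span_x.
have eBM : BM = \matrix_(x, y) ((x == y)%:R * h 0 x).
  apply/matrixP => x y; rewrite !mxE.
  under eq_bigr do rewrite (TT_diag hA) ?enum_valP //.
  case: (eqVneq x y) => [<-|nxy].
    rewrite (bigD1 x) //= big1 ?addr0; first by rewrite !eqxx mulr1 mul1r.
    move=> z nzx; rewrite eqxx /= (inj_eq enum_val_inj) eq_sym (negPf nzx) mulr0 //.
  rewrite mul0r big1 // => z _; by rewrite (inj_eq enum_val_inj) (negPf nxy) mulr0.
have rB : (r <= \rank BM)%nat.
  have e1 : rowsub f (colsub f BM) = 1%:M.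
    apply/matrixP => i j; rewrite eBM !mxE (inj_eq finj) hf mulr1.
    by case: (i == j).
  rewrite -[r](mxrank1 F) -e1 rowsubE.
  apply: leq_trans (mxrankM_maxr _ _) _.
  rewrite -[BM in colsub f BM]mulmx1 -mulmx_colsub; exact: mxrankM_maxl.
have := mxrank_add (BX + BY) BZ; rewrite -eB BZ0 mxrank0 addn0 => h1.
have := mxrank_add BX BY => h2.
have := rank_leq_row Phi.
have h3 : (r <= \rank Phi + \rank Phi)%nat.
  apply: leq_trans rB _; apply: leq_trans h1 _; apply: leq_trans h2 _.
  exact: leq_add.
have h4 : (N <= \rank Phi + \rank Phi + \rank Phi)%nat.
  apply: leq_trans hr _; exact: leq_add.
move: h4 (rank_leq_row Phi); rewrite -/N; lia.
Qed.

End Main.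

End Core.

Lemma pow_le2 (D t : nat) : (2 <= D)%nat -> (2 ^ t <= D ^ t)%nat.
Proof.
move=> hD; elim: t => [//|t IH]; rewrite !expnS; exact: leq_mul.
Qed.

Lemma count_bound (I : finType) (D k : nat) : (2 <= D)%nat ->
  (#|[set g : {ffun I -> 'I_D.+1} | (#|supp g| <= k)%nat]| * 2 ^ k <= 3 ^ #|I| * D ^ k)%nat.
Proof.
move=> hD; set S := [set g | _].
pose w (g : {ffun I -> 'I_D.+1}) := (\prod_i (if g i != ord0 then 2 else D))%nat.
have sw : (\sum_g w g = (3 * D) ^ #|I|)%nat.
  rewrite /w -(bigA_distr_bigA (fun i (v : 'I_D.+1) => if v != ord0 then 2 else D)%nat).
  rewrite -prod_nat_const; apply: eq_bigr => i _.
  rewrite (bigD1 ord0) //= (eq_bigr (fun _ => 2%nat)); last by move=> v ->.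
  rewrite (eq_bigl (fun v => v \in [set~ ord0])); last by move=> v; rewrite !inE.
  by rewrite sum_nat_const cardsC1 card_ord /=; lia.
have wg g : (w g = 2 ^ #|supp g| * D ^ #|~: supp g|)%nat.
  rewrite /w (bigID (fun i => i \in supp g)) /=.
  rewrite (eq_bigr (fun _ => 2%nat)); last by move=> i; rewrite inE => ->.
  rewrite [X in (_ * X)%nat](eq_bigr (fun _ => D)); last by move=> i; rewrite inE => /negbTE ->.
  rewrite prod_nat_const (eq_bigl (fun i => i \in ~: supp g)) ?prod_nat_const.
  - reflexivity.
  - by move=> i /=; rewrite in_setC.
have key : (#|S| * 2 ^ k * D ^ #|I| <= D ^ k * \sum_g w g)%nat.
  rewrite -sum1_card !big_distrl /= big_distrr /=.
  rewrite big_mkcond /=; apply: leq_sum => g _; case: ifP => // hs.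
  move: hs; rewrite inE mul1n wg => hs; rewrite -(cardsC (supp g)).
  move: #|supp g| #|~: supp g| hs => s a hs.
  rewrite -(subnKC hs) !expnD.
  have := pow_le2 (k - s) hD.
  set u := (2 ^ (k - s))%nat; set v := (D ^ (k - s))%nat => huv.
  move: (2 ^ s)%nat (D ^ s)%nat (D ^ a)%nat huv => p q r huv.
  have := leq_mul (leqnn (p * q * r)) huv; nia.
rewrite sw expnMn mulnA [X in (_ <= X)%nat]mulnC mulnA in key.
rewrite -(@leq_pmul2r (D ^ #|I|)) ?expn_gt0; last by lia.
apply: leq_trans key _; move: (D ^ #|I|)%nat (D ^ k)%nat (3 ^ #|I|)%nat => p q r; nia.
Qed.

Definition pw (I : finType) (D m : nat) (t : {ffun 'I_m -> {ffun I -> 'I_D.+1}}) :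
  {ffun (I * 'I_m)%type -> 'I_D.+1} := [ffun p => t p.2 p.1].
Definition powA (I : finType) (D : nat) (A : {set {ffun I -> 'I_D.+1}}) m :=
  (@pw I D m) @: [set t | t \in ffun_on A].

Lemma pw_inj (I : finType) D m : injective (@pw I D m).
Proof.
move=> t1 t2 e; apply/ffunP => j; apply/ffunP => i.
by move/ffunP: e => /(_ (i, j)); rewrite !ffunE.
Qed.

Lemma card_powA (I : finType) D (A : {set {ffun I -> 'I_D.+1}}) m : #|powA A m| = (#|A| ^ m)%nat.
Proof. by rewrite card_imset ?cardsE ?card_ffun_on ?card_ord //; exact: pw_inj. Qed.

Lemma KF_powA (I : finType) D (A : {set {ffun I -> 'I_D.+1}}) m : KF A -> KF (powA A m).
Proof.
move=> hA X Y Z /imsetP[tx]; rewrite inE => /ffun_onP hx ->.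
move=> /imsetP[ty]; rewrite inE => /ffun_onP hy ->.
move=> /imsetP[tz]; rewrite inE => /ffun_onP hz -> hn.
case: (boolP [exists j, ~~ ((tx j == ty j) && (ty j == tz j))]) => [/existsP [j hj]|].
  have [i hi] := hA _ _ _ (hx j) (hy j) (hz j) hj.
  by exists (i, j); rewrite !ffunE.
rewrite negb_exists => /forallP hall; move: hn.
have [e1 e2] : tx = ty /\ ty = tz.
  split; apply/ffunP => j; have := hall j; rewrite negbK => /andP[/eqP ? /eqP ?] //.
by rewrite e1 e2 !eqxx.
Qed.

Lemma expn_pow m n : expn m n = Nat.pow m n.
Proof. by elim: n => //= n IH; rewrite expnS IH. Qed.

Section Reals.
Local Open Scope R_scope.

Lemma limit_trick (a b : R) : 0 < b -> 0 <= a ->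
  (forall m : nat, leq 1 m -> (a ^ m)%R <= 3 * (b ^ m)%R) -> a <= b.
Proof.
move=> hb ha hm; apply: Rnot_lt_le => hab.
set e := a / b - 1.
have he : 0 < e.
  rewrite /e; apply: Rlt_Rminus; apply: (Rmult_lt_reg_r b) => //.
  by rewrite Rmult_1_l /Rdiv Rmult_assoc Rinv_l ?Rmult_1_r //; lra.
have [n hn] := INR_archimed e 3 he.
have h1 := poly n.+1 e he.
have h2 := hm n.+1 isT.
have ea : a = (1 + e) * b by rewrite /e /Rdiv; field; lra.
rewrite ea Rpow_mult_distr in h2.
have hbm : 0 < b ^ n.+1 by apply: pow_lt.
have hSn : INR n <= INR n.+1 by apply: le_INR; apply/leP.
have : 3 < (1 + e) ^ n.+1.
  apply: Rlt_le_trans h1; apply: Rlt_le_trans (_ : 1 + INR n * e <= _); first lra.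
  have := Rmult_le_compat_r e _ _ (Rlt_le _ _ he) hSn; lra.
move=> h3; have := Rmult_lt_compat_r _ _ _ hbm h3; lra.
Qed.

Lemma c_eq (D : nat) : leq 2 D ->
  (3 / Rpower 2 (2/3) * Rpower (INR D.+1 - 1) (2/3) = 3 * Rpower (INR D / 2) (2/3)).
Proof.
move=> hD.
have hD0 : 0 < INR D by apply: lt_0_INR; apply/ltP; case: D hD.
have e1 : INR D.+1 - 1 = INR D / 2 * 2 by rewrite S_INR; field.
rewrite e1 -Rpower_mult_distr; try lra.
have := exp_pos (2 / 3 * ln 2); rewrite /Rpower => hp.
field; lra.
Qed.

Lemma real_step (a K k d : nat) : leq 2 d -> leq (3 * k) (2 * K) ->
  leq (a * 2 ^ k) (3 * 3 ^ K * d ^ k) ->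
  INR a <= 3 * (3 * Rpower (INR d / 2) (2/3)) ^ K.
Proof.
move=> hd hk ha.
have hd2 : 2 <= INR d by have h := le_INR 2 d (elimT leP hd); simpl in h; lra.
set q := INR d / 2.
have hq : 1 <= q by rewrite /q; lra.
have h1 : INR a * 2 ^ k <= 3 * 3 ^ K * q ^ k * 2 ^ k.
  have := le_INR _ _ (elimT leP ha); rewrite !expn_pow !mult_INR !pow_INR.
  have -> : INR d = q * 2 by rewrite /q; field.
  have e2 : INR 2 = 2 by simpl; lra.
  have e3 : INR 3 = 3 by simpl; lra.
  rewrite Rpow_mult_distr e2 e3 => h; lra.
have h2 : INR a <= 3 * 3 ^ K * q ^ k.
  apply: (Rmult_le_reg_r (2 ^ k)); first by apply: pow_lt; lra.
  exact: h1.
have h3 : q ^ k <= Rpower q (2/3) ^ K.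
  rewrite -(@Rpower_pow K (Rpower q (2/3))); last by rewrite /Rpower; apply: exp_pos.
  rewrite Rpower_mult -(@Rpower_pow k q); last lra.
  apply: Rle_Rpower => //.
  have h := le_INR _ _ (elimT leP hk); rewrite !mult_INR in h; simpl INR in h; lra.
rewrite Rpow_mult_distr -Rmult_assoc.
apply: Rle_trans h2 _; apply: Rmult_le_compat_l => //.
apply: Rmult_le_pos; [lra | apply: pow_le; lra].
Qed.
End Reals.

Local Close Scope ring_scope.

Lemma diff_coord (I : finType) (D : nat) (u v : {ffun I -> 'I_D.+1}) :
  u != v -> exists i, u i != v i.
Proof.
move=> nuv; case: (boolP [exists i, u i != v i]) => [/existsP //|].
rewrite negb_exists => /forallP h; move: nuv; suff -> : u = v by rewrite eqxx.
by apply/ffunP => i; have := h i; rewrite negbK => /eqP.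
Qed.

Lemma KF_of_sf (D n : nat) (A : {set vec D.+1 n}) : sunflower_free A -> KF A.
Proof.
move=> hs u v w uA vA wA hn.
case: (eqVneq u v) => [euv|nuv].
  have nvw : v != w by move: hn; rewrite euv eqxx.
  have [i hi] := diff_coord nvw; exists i; by rewrite euv eqxx hi.
case: (eqVneq v w) => [evw|nvw].
  have [i hi] := diff_coord nuv; exists i; by rewrite -evw eqxx (eq_sym (v i)) hi /= orbT.
case: (eqVneq u w) => [euw|nuw].
  have [i hi] := diff_coord nuv; exists i; by rewrite -euw eqxx hi !orbT.
exact: hs.
Qed.

Theorem theorem1p5 (D n : nat) (A : {set vec D n}) :
  3 <= D -> 1 <= n -> sunflower_free A ->
  (INR #|A| <= c_const D ^ n)%R.
Proof.
case: D A => [//|d] A hD _ hs.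
have hd : (2 <= d)%nat by [].
have KA := KF_of_sf hs.
rewrite /c_const c_eq //.
set c := (3 * Rpower (INR d / 2) (2 / 3))%R.
have cpos : (0 < c)%R by rewrite /c /Rpower; have := exp_pos (2 / 3 * ln (INR d / 2)); lra.
apply: limit_trick; [exact: pow_lt | exact: pos_INR |].
move=> m hm; rewrite -pow_mult -pow_INR.
pose I' := ('I_n * 'I_m)%type.
pose k := ((2 * #|{: I'}|) %/ 3)%nat.
have h1 := core (KF_powA (m:=m) KA); rewrite card_powA in h1.
have h2 := @count_bound I' d k hd.
have cI : #|{: I'}| = (n * m)%nat by rewrite card_prod !card_ord.
apply: (@real_step _ (n * m) k d hd).
  rewrite /k cI; have := leq_trunc_div (2 * (n * m)) 3; rewrite mulnC; lia.
rewrite -expn_pow; apply: leq_trans (leq_mul h1 (leqnn (2 ^ k))) _.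
rewrite -!mulnA; apply: leq_mul => //; rewrite -cI; exact: h2.
Qed.
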